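(* Let $d\in\mathbb N$ and let $\rho:SL(2,\mathbb Z)\to GL(d,\mathbb C)$ be a representation such that $\rho(T)$ is diagonalisable with eigenvalues $\lambda_1,\dots,\lambda_d$ (with multiplicity), where $T=\begin{pmatrix}1&1\\0&1\end{pmatrix}$. If no product $\prod_{i\in I}\lambda_i$ over a non-empty proper subset $I\subsetneq\{1,\dots,d\}$ is a $12$th root of unity, then $\rho$ is irreducible. *)

(* Defs.v *)
From HB Require Import structures.
From mathcomp Require Import all_boot all_order all_algebra.
From mathcomp Require Import complex.
From mathcomp Require Import reals.
Set Implicit Arguments. Unset Strict Implicit. Unset Printing Implicit Defensive.
Import Order.TTheory GRing.Theory Num.Theory.
Local Open Scope ring_scope.

Definition inSL2Z (A : 'M[int]_2) : Prop := \det A = 1.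

(* T = [[1,1],[0,1]] *)
Definition Tmat : 'M[int]_2 :=
  \matrix_(i < 2, j < 2) (if (i <= j)%N then 1 else 0).

(* rho : SL(2,Z) -> GL(d,F) is a group homomorphism (its values are then
   automatically invertible, since rho 1 = 1 and inverses lie in SL(2,Z)). *)
Definition is_SL2Z_rep (F : fieldType) (d : nat)
    (rho : 'M[int]_2 -> 'M[F]_d) : Prop :=
  rho 1%:M = 1%:M /\
  (forall A B, inSL2Z A -> inSL2Z B -> rho (A *m B) = rho A *m rho B).

(* A subspace of F^d (column vectors), given as the column space of W^T, i.e.
   the row space of the matrix U = W^T, is rho-invariant when
   rho(A) W ⊆ W for all A in SL(2,Z); in row-vector language
   U *m (rho A)^T <= U. *)
Definition rep_invariant (F : fieldType) (d : nat)
    (rho : 'M[int]_2 -> 'M[F]_d) (U : 'M[F]_d) : Prop :=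
  forall A, inSL2Z A -> stablemx U (rho A)^T.

Definition rep_irreducible (F : fieldType) (d : nat)
    (rho : 'M[int]_2 -> 'M[F]_d) : Prop :=
  (0 < d)%N /\
  forall U : 'M[F]_d, rep_invariant rho U -> U = 0 \/ row_full U.

(* Main.v *)
Require Import Defs.
From HB Require Import structures.
From mathcomp Require Import all_boot all_order all_algebra.
From mathcomp Require Import complex.
From mathcomp Require Import reals.
Import Order.TTheory GRing.Theory Num.Theory.
Local Open Scope ring_scope.
Set Implicit Arguments. Unset Strict Implicit. Unset Printing Implicit Defensive.
Lemma key (F : fieldType) r d (B : 'M[F]_(r,d)) (hB : row_free B) (D : 'rV[F]_d)
  (X : 'M[F]_r) : X *m B = B *m diag_mx D ->
  exists f : 'I_r -> 'I_d, injective f /\ \det X = \prod_j D 0 (f j).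
Proof.
move=> hXB.
have hBT : row_full B^T by rewrite /row_full mxrank_tr; exact: hB.
pose f := fullrankfun hBT.
have hC := fullrowsub_unit hBT.
set C := rowsub f B^T in hC.
have eC : colsub f B = C^T by apply/matrixP => i j; rewrite !mxE.
have hCT : C^T \in unitmx by rewrite unitmx_tr.
exists f; split; first exact: fullrankfun_inj.
have := congr1 (colsub f) hXB.
rewrite -mulmx_colsub eC.
have -> : colsub f (B *m diag_mx D) = C^T *m diag_mx (\row_j D 0 (f j)).
  by rewrite -eC; apply/matrixP => i j; rewrite !mul_mx_diag !mxE.
have hc : \det C^T != 0 by rewrite -unitfE -unitmxE.
move=> /(congr1 determinant); rewrite !det_mulmx det_diag => h.
apply: (mulIf hc); rewrite h mulrC; congr (_ * _).
by apply: eq_bigr => j _; rewrite mxE.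
Qed.
Definition Smat : 'M[int]_2 :=
  \matrix_(i < 2, j < 2) (if i == j then 0 else if (i < j)%N then -1 else 1).

Ltac mxcomp := apply/matrixP => - [[|[|//]]] ? [[|[|//]]] ?;
  repeat (rewrite !mxE || rewrite !big_ord_recl !big_ord0); rewrite //=.

Lemma S4 : Smat *m Smat *m Smat *m Smat = 1%:M.
Proof. mxcomp. Qed.
Lemma ST3 : (Smat *m Tmat) *m (Smat *m Tmat) *m (Smat *m Tmat) = Smat *m Smat.
Proof. mxcomp. Qed.
Lemma detS : inSL2Z Smat.
Proof. rewrite /inSL2Z (expand_det_row _ 0) !big_ord_recl big_ord0 /cofactor !det_mx11 !mxE /=. done. Qed.
Lemma detT : inSL2Z Tmat.
Proof. rewrite /inSL2Z (expand_det_row _ 0) !big_ord_recl big_ord0 /cofactor !det_mx11 !mxE /=. done. Qed.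

Unset Implicit Arguments.
Theorem lemma5p2 (R : realType) (d : nat) (d_gt0 : (0 < d)%N)
    (rho : 'M[int]_2 -> 'M[R[i]]_d) (hrho : is_SL2Z_rep rho)
    (P : 'M[R[i]]_d) (lam : 'rV[R[i]]_d)
    (hP : P \in unitmx)
    (hT : rho Tmat = invmx P *m diag_mx lam *m P)
    (hlam : forall I : {set 'I_d}, I != set0 -> I != setT ->
              (\prod_(k in I) lam 0 k) ^+ 12 != 1) :
  rep_irreducible rho.
Proof.
split; first exact: d_gt0.
move=> U hU.
case: (eqVneq U 0) => [->|hU0]; [by left | right].
apply: contraT => hnf.
case: hrho => hrho1 hrhoM.
pose B := row_base U.
have hB : row_free B := row_base_free U.
have hsub : forall A, inSL2Z A -> (B *m (rho A)^T <= B)%MS.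
  move=> A hA; rewrite (eqmxMr _ (eq_row_base U)) eq_row_base; exact: hU A hA.
clearbody B.
pose X A := B *m (rho A)^T *m pinvmx B.
have hX : forall A, inSL2Z A -> X A *m B = B *m (rho A)^T.
  by move=> A hA; apply: mulmxKpV; apply: hsub.
clearbody X.
have SLM : forall A C, inSL2Z A -> inSL2Z C -> inSL2Z (A *m C).
  by move=> A C; rewrite /inSL2Z det_mulmx => -> ->; rewrite mulr1.
have hmul : forall A C, inSL2Z A -> inSL2Z C -> X (A *m C) = X C *m X A.
  move=> A C hA hC; apply: (row_free_inj hB).
  rewrite (hX _ (SLM _ _ hA hC)) hrhoM // trmx_mul -!mulmxA (hX _ hA) mulmxA (hX _ hC).
  by rewrite mulmxA.
pose chi A := \det (X A).
have hchi : forall A C, inSL2Z A -> inSL2Z C -> chi (A *m C) = chi A * chi C.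
  by move=> A C hA hC; rewrite /chi hmul // det_mulmx mulrC.
have SL1 : inSL2Z 1%:M by rewrite /inSL2Z det1.
have chi1 : chi 1%:M = 1.
  rewrite /chi.
  have -> : X 1%:M = 1%:M.
    by apply: (row_free_inj hB); rewrite hX // hrho1 trmx1 mulmx1 mul1mx.
  exact: det1.
have hS := detS; have hTm := detT.
have hSS := SLM _ _ hS hS; have hSSS := SLM _ _ hSS hS.
have hST := SLM _ _ hS hTm; have hST2 := SLM _ _ hST hST.
have s4 : chi Smat ^+ 4 = 1.
  rewrite -chi1 -S4 !hchi //.
  by rewrite !exprS expr0 mulr1 !mulrA.
have st3 : (chi Smat * chi Tmat) ^+ 3 = chi Smat ^+ 2.
  have e : chi (Smat *m Tmat *m (Smat *m Tmat) *m (Smat *m Tmat)) = chi (Smat *m Smat)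
    by rewrite ST3.
  move: e; rewrite !hchi // => e.
  by rewrite !exprS expr0 !mulr1 -e !mulrA.
have t12 : chi Tmat ^+ 12 = 1.
  have e1 : (chi Smat * chi Tmat) ^+ 12 = 1.
    by rewrite (_ : 12 = 3 * 4)%N // exprM st3 -exprM (_ : 2 * 4 = 4 * 2)%N // exprM s4 expr1n.
  have s12 : chi Smat ^+ 12 = 1 by rewrite (_ : 12 = 4 * 3)%N // exprM s4 expr1n.
  by move: e1; rewrite exprMn s12 mul1r.
pose B' := B *m P^T.
have hB' : row_free B'.
  by rewrite /row_free mxrankMfree ?row_free_unit ?unitmx_tr //; exact: hB.
have hXT : X Tmat *m B' = B' *m diag_mx lam.
  rewrite /B' mulmxA hX // hT !trmx_mul tr_diag_mx -!mulmxA.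
  by rewrite -trmx_mul mulmxV // trmx1 mulmx1.
have [f [finj hdet]] := key hB' hXT.
pose I := [set f j | j : 'I_(\rank U)].
have cardI : #|I| = \rank U by rewrite card_imset //; exact: card_ord.
have rpos : (0 < \rank U)%N by rewrite lt0n mxrank_eq0.
have rlt : (\rank U < d)%N by rewrite ltn_neqAle rank_leq_col andbT; exact: hnf.
have h1 : I != set0 by rewrite -card_gt0 cardI.
have h2 : I != setT.
  by apply/eqP => eI; move: cardI; rewrite eI cardsT card_ord => eU; rewrite -eU ltnn in rlt.
have := hlam I h1 h2.
rewrite big_imset /=; last by move=> x y _ _; apply: finj.
have -> : \prod_(i in 'I_(\rank U)) lam 0 (f i) = \det (X Tmat).
  by rewrite hdet; apply: eq_bigl => i; rewrite inE.
by rewrite /chi in t12; rewrite t12 eqxx.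
Qed.
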